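(* Let $D$ be an integer which is not a perfect square, let $A,B\in\mathbb{Z}$, and let $p\neq 2$ be a prime with $p\mid D$ and $p^2\nmid D$. Let $l\geq 1$ be an integer such that $p^{l+1}$ divides none of $A$, $B$, $A-B$, $G(A,B)$, where $G(A,B)=A^2-2AB+B^2-2A-2B+1$. Suppose $\mathbf{t}=(t_0,\ldots,t_4)\in(\mathbb{Z}/p^{8l+1}\mathbb{Z})^5$ has components not all divisible by $p$ and satisfies $Q_1(\mathbf{t})\equiv Q_2(\mathbf{t})\equiv 0\pmod{p^{8l+1}}$. Then $p^{4l+1}$ does not divide all $2\times 2$ minors of the Jacobian matrix of $(Q_1,Q_2)$ at $\mathbf{t}$.
   Context: $Q_1(\mathbf{t})=t_2^2-Dt_3^2-t_0t_1$ and $Q_2(\mathbf{t})=t_2^2-Dt_4^2-(t_0+At_1)(t_0+Bt_1)$. The Jacobian matrix at $\mathbf{t}$ is $\begin{pmatrix} t_1 & t_0 & -2t_2 & 2Dt_3 & 0\\ 2t_0+(A+B)t_1 & (A+B)t_0+2ABt_1 & -2t_2 & 0 & 2Dt_4\end{pmatrix}$ (up to sign conventions, the minors are those of the matrix of partial derivatives). *)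

(* Defs.v *)
From Stdlib Require Import ZArith Znumtheory List.
Import ListNotations.
Open Scope Z_scope.

(* t = (t0,t1,t2,t3,t4) is represented by integer lifts of its residues mod p^(8l+1). *)
Definition Q1 (D t0 t1 t2 t3 t4 : Z) : Z := t2^2 - D*t3^2 - t0*t1.
Definition Q2 (D A B t0 t1 t2 t3 t4 : Z) : Z :=
  t2^2 - D*t4^2 - (t0 + A*t1)*(t0 + B*t1).
Definition G (A B : Z) : Z := A^2 - 2*A*B + B^2 - 2*A - 2*B + 1.

Definition jac_row1 (D t0 t1 t2 t3 t4 : Z) : list Z :=
  [-t1; -t0; 2*t2; -2*D*t3; 0].
Definition jac_row2 (D A B t0 t1 t2 t3 t4 : Z) : list Z :=
  [-(2*t0 + (A+B)*t1); -((A+B)*t0 + 2*A*B*t1); 2*t2; 0; -2*D*t4].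

Definition jac_minor (D A B t0 t1 t2 t3 t4 : Z) (i j : nat) : Z :=
  let r1 := jac_row1 D t0 t1 t2 t3 t4 in
  let r2 := jac_row2 D A B t0 t1 t2 t3 t4 in
  nth i r1 0 * nth j r2 0 - nth j r1 0 * nth i r2 0.

(* Main.v *)
Require Import Defs.
From Stdlib Require Import ZArith Znumtheory List Lia.
Open Scope Z_scope.

Lemma pow_div (p a b: Z): 0<=a<=b -> (p^a | p^b).
Proof. intros H. exists (p^(b-a)). rewrite <- Z.pow_add_r by lia. f_equal; lia. Qed.

Lemma relp_pow p u k : prime p -> ~(p|u) -> 0<=k -> rel_prime (p^k) u.
Proof.
  intros Hp Hu Hk. apply rel_prime_sym. pattern k; apply natlike_ind; auto.
  - rewrite Z.pow_0_r. apply rel_prime_sym, rel_prime_1.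
  - intros x Hx IH. rewrite Z.pow_succ_r by lia. apply rel_prime_mult; auto.
    apply rel_prime_sym, prime_rel_prime; auto.
Qed.

Lemma cancelu p u k z : prime p -> ~(p|u) -> 0<=k -> (p^k | u*z) -> (p^k | z).
Proof. intros. eapply Gauss; eauto. apply relp_pow; auto. Qed.

Lemma ndiv_mul p u w : prime p -> ~(p|u) -> ~(p|w) -> ~(p|u*w).
Proof. intros Hp H1 H2 H. destruct (prime_mult p Hp u w H); auto. Qed.

Lemma decomp p : prime p -> forall x, x<>0 -> exists i y, 0<=i /\ x = p^i*y /\ ~(p|y).
Proof.
  intros Hp. assert (Hp1 : 1 < p) by (destruct Hp; lia).
  assert (forall n x, Z.abs x < Z.of_nat n -> x<>0 -> exists i y, 0<=i /\ x = p^i*y /\ ~(p|y)).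
  { induction n; intros x Hx Hx0. lia.
    destruct (Zdivide_dec p x) as [[q Hq]|Hn].
    - subst x. assert (q <> 0) by (intro; subst; lia).
      rewrite Z.abs_mul in Hx. rewrite (Z.abs_eq p) in Hx by lia.
      destruct (IHn q) as [i [y [Hi [Hq' Hy]]]]; auto.
      { assert (0 < Z.abs q) by lia. nia. }
      exists (i+1), y. split. lia. split; auto. rewrite Z.pow_add_r by lia. rewrite Hq'. ring.
    - exists 0, x. rewrite Z.pow_0_r. repeat split; auto; lia. }
  intros x Hx. apply (H (S (Z.to_nat (Z.abs x)))); auto. lia.
Qed.

Lemma Lmul p a b x y : prime p -> 0<=a -> 0<=b -> ~(p^(a+1) | x) -> ~(p^(b+1) | y) -> ~(p^(a+b+1) | x*y).
Proof.
  intros Hp Ha Hb Hx Hy H. assert (Hp1 : 1 < p) by (destruct Hp; lia).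
  assert (x<>0) by (intro; subst; apply Hx; apply Z.divide_0_r).
  assert (y<>0) by (intro; subst; apply Hy; apply Z.divide_0_r).
  destruct (decomp p Hp x) as [i [x' [Hi [Ex Hx']]]]; auto.
  destruct (decomp p Hp y) as [j [y' [Hj [Ey Hy']]]]; auto.
  assert (i <= a). { destruct (Z_le_gt_dec i a); auto. exfalso; apply Hx. rewrite Ex.
    apply Z.divide_mul_l. apply pow_div. lia. }
  assert (j <= b). { destruct (Z_le_gt_dec j b); auto. exfalso; apply Hy. rewrite Ey.
    apply Z.divide_mul_l. apply pow_div. lia. }
  assert (Hk3 : (p^(i+j+1) | x*y)). { eapply Z.divide_trans; [|exact H]. apply pow_div. lia. }
  assert (Exy : x*y = p^(i+j) * (x'*y')). { rewrite Ex, Ey, Z.pow_add_r by lia. ring. }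
  rewrite Exy, Z.pow_add_r, Z.pow_1_r in Hk3 by lia.
  apply Z.mul_divide_cancel_l in Hk3. apply (ndiv_mul p x' y'); auto.
  apply Z.pow_nonzero; lia.
Qed.

Lemma mul_div_mono a b c e : (a|b) -> (c|e) -> (a*c | b*e).
Proof. intros [x Hx] [y Hy]. exists (x*y). subst. ring. Qed.
Lemma weak p a b x : (p^a | x) -> 0<=b<=a -> (p^b | x).
Proof. intros H Hb. eapply Z.divide_trans; [|exact H]. apply pow_div; lia. Qed.

Lemma lc2 k a b c1 c2 e : (k|a) -> (k|b) -> e = c1*a+c2*b -> (k|e).
Proof. intros H1 H2 ->. apply Z.divide_add_r; apply Z.divide_mul_r; auto. Qed.

Lemma lc3 k a b c c1 c2 c3 e : (k|a) -> (k|b) -> (k|c) -> e = c1*a+c2*b+c3*c -> (k|e).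
Proof. intros H1 H2 H3 ->. repeat apply Z.divide_add_r; apply Z.divide_mul_r; auto. Qed.

Theorem lemma2p2 (D A B p l t0 t1 t2 t3 t4 : Z) :
  (~ exists m : Z, D = m * m) ->
  prime p -> p <> 2 -> (p | D) -> ~ (p^2 | D) ->
  1 <= l ->
  ~ (p^(l+1) | A) -> ~ (p^(l+1) | B) -> ~ (p^(l+1) | A - B) ->
  ~ (p^(l+1) | G A B) ->
  ~ ((p | t0) /\ (p | t1) /\ (p | t2) /\ (p | t3) /\ (p | t4)) ->
  (p^(8*l+1) | Q1 D t0 t1 t2 t3 t4) ->
  (p^(8*l+1) | Q2 D A B t0 t1 t2 t3 t4) ->
  ~ (forall i j : nat, (i < j < 5)%nat ->
       (p^(4*l+1) | jac_minor D A B t0 t1 t2 t3 t4 i j)).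
Proof.
  intros HD Hp Hp2 HpD Hp2D Hl HA HB HAB HG Ht HQ1 HQ2 Hm.
  assert (Hp1 : 1 < p) by (destruct Hp; lia).
  assert (n2 : ~(p|2)).
  { intro H. apply Z.divide_pos_le in H; lia. }
  destruct HpD as [d Hd].
  assert (nd : ~(p|d)).
  { intros [e He]. apply Hp2D. exists e. rewrite Hd, He. ring. }
  unfold Q1 in HQ1. unfold Q2 in HQ2.
  assert (E1 : (p^(4*l+1) | A*B*t1^2 - t0^2)).
  { apply (cancelu p 2); auto; try lia.
    replace (2*(A*B*t1^2 - t0^2)) with (jac_minor D A B t0 t1 t2 t3 t4 0 1)
      by (unfold jac_minor, jac_row1, jac_row2; cbn [nth]; ring). apply Hm; lia. }
  assert (E2 : (p^(4*l+1) | t2*(2*t0+(A+B-1)*t1))).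
  { apply (cancelu p 2); auto; try lia.
    replace (2*(t2*(2*t0+(A+B-1)*t1))) with (jac_minor D A B t0 t1 t2 t3 t4 0 2)
      by (unfold jac_minor, jac_row1, jac_row2; cbn [nth]; ring). apply Hm; lia. }
  assert (E3 : (p^(4*l+1) | D*t3*(2*t0+(A+B)*t1))).
  { apply (cancelu p 2); auto; try lia. apply Z.divide_opp_r.
    replace (-(2*(D*t3*(2*t0+(A+B)*t1)))) with (jac_minor D A B t0 t1 t2 t3 t4 0 3)
      by (unfold jac_minor, jac_row1, jac_row2; cbn [nth]; ring). apply Hm; lia. }
  destruct (Zdivide_dec p t1) as [Hp1t|Hn1].
  -
    assert (P1 : (p | p^(4*l+1))) by (rewrite <- (Z.pow_1_r p) at 1; apply pow_div; lia).
    assert (P2 : (p*p | p^(8*l+1))) by (rewrite <- Z.pow_2_r; apply pow_div; lia).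
    assert (H0 : (p | t0)).
    { assert (H : (p | t0*t0)).
      { apply (lc2 p (A*B*t1^2 - t0^2) t1 (-1) (A*B*t1)).
        eapply Z.divide_trans; eauto. auto. ring. }
      destruct (prime_mult p Hp t0 t0 H); auto. }
    assert (H2 : (p | t2)).
    { assert (H : (p | t2*t2)).
      { apply (lc3 p (t2 ^ 2 - D * t3 ^ 2 - t0 * t1) p t0 1 (d*t3^2) t1).
        eapply Z.divide_trans; [|eauto]. apply (Z.divide_trans _ (p*p)); auto. apply Z.divide_factor_l.
        apply Z.divide_refl. auto. rewrite Hd. ring. }
      destruct (prime_mult p Hp t2 t2 H); auto. }
    destruct (Zdivide_dec p t3) as [H3|H3].
    + destruct (Zdivide_dec p t4) as [H4|H4].
      { apply Ht; tauto. }
      assert (H : (p*p | p*(d*t4*t4))).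
      { apply (lc3 (p*p) (t2 ^ 2 - D * t4 ^ 2 - (t0 + A * t1) * (t0 + B * t1)) (t2*t2)
           ((t0 + A * t1) * (t0 + B * t1)) (-1) 1 (-1)).
        eapply Z.divide_trans; eauto. apply mul_div_mono; auto.
        apply mul_div_mono; apply Z.divide_add_r; auto; apply Z.divide_mul_r; auto.
        rewrite Hd. ring. }
      apply Z.mul_divide_cancel_l in H; [|lia].
      destruct (prime_mult p Hp _ _ H) as [H'|H']; [|tauto].
      destruct (prime_mult p Hp _ _ H'); tauto.
    + assert (H : (p*p | p*(d*t3*t3))).
      { apply (lc3 (p*p) (t2 ^ 2 - D * t3 ^ 2 - t0 * t1) (t2*t2)
           (t0 * t1) (-1) 1 (-1)).
        eapply Z.divide_trans; eauto. apply mul_div_mono; auto.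
        apply mul_div_mono; auto.
        rewrite Hd. ring. }
      apply Z.mul_divide_cancel_l in H; [|lia].
      destruct (prime_mult p Hp _ _ H) as [H'|H']; [|tauto].
      destruct (prime_mult p Hp _ _ H'); tauto.
  -
    assert (H0 : ~ (p^(2*l+1) | t0)).
    { intro H. apply (Lmul p l l A B); auto; try lia.
      apply (cancelu p (t1*t1)); [auto|apply ndiv_mul; auto|lia|].
      apply (lc2 _ (A*B*t1^2 - t0^2) (t0*t0) 1 1).
      apply (weak _ (4*l+1)); auto; lia.
      apply Z.divide_mul_r. replace (l+l+1) with (2*l+1) by lia. auto. ring. }
    assert (nt13 : ~(p | t1*t1*t1)) by (repeat apply ndiv_mul; auto).
    assert (PM : forall x, (p^(8*l+1) | x) -> (p^(4*l+1) | x)).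
    { intros. apply (weak _ (8*l+1)); auto; lia. }
    destruct (Zdivide_dec p (2*t0+(A+B)*t1)) as [HY|HnY].
    + assert (HnX : ~(p | 2*t0+(A+B-1)*t1)).
      { intro HX. apply Hn1. apply (lc2 _ _ _ 1 (-1) _ HY HX). ring. }
      assert (Et2 : (p^(4*l+1) | t2)).
      { apply (cancelu p (2*t0+(A+B-1)*t1)); auto; try lia.
        rewrite (Z.mul_comm (2*t0+(A+B-1)*t1)); auto. }
      assert (Et22 : (p^(8*l+1) | t2*t2)).
      { apply (weak _ ((4*l+1)+(4*l+1))); try lia. rewrite Z.pow_add_r by lia.
        apply mul_div_mono; auto. }
      assert (F : (p^(8*l+1) | D*t3^2 + t0*t1)).
      { apply (lc2 _ _ _ 1 (-1) _ Et22 HQ1). ring. }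
      assert (K : (p^(4*l+1) | t1*t1*t1 * (t0*((A-B)*(A-B))))).
      { apply (lc3 _ (D*t3^2 + t0*t1) (D*t3*(2*t0+(A+B)*t1)) (A*B*t1^2 - t0^2)
            ((A-B)^2*t1^2) (-(t3*((2*t0+(A+B)*t1)-4*t0))) (4*D*t3^2)); auto. ring. }
      apply cancelu in K; auto; try lia.
      apply (Lmul p (2*l) (2*l) t0 ((A-B)*(A-B))); auto; try lia.
      replace (2*l+1) with (l+l+1) by lia. apply Lmul; auto; lia.
      replace (2*l+2*l+1) with (4*l+1) by lia. auto.
    + assert (Et3 : (p^(4*l+1) | D*t3)).
      { apply (cancelu p (2*t0+(A+B)*t1)); auto; try lia.
        rewrite (Z.mul_comm (2*t0+(A+B)*t1)); auto. }
      assert (F0 : (p*p^(8*l+1) | p*(d*(D*t3^2)))).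
      { replace (p*p^(8*l+1)) with (p^(4*l+1)*p^(4*l+1)) by
          (rewrite <- Z.pow_add_r by lia; rewrite <- Z.pow_succ_r by lia; f_equal; lia).
        replace (p*(d*(D*t3^2))) with ((D*t3)*(D*t3)) by (rewrite Hd; ring).
        apply mul_div_mono; auto. }
      apply Z.mul_divide_cancel_l in F0; [|lia].
      apply cancelu in F0; auto; try lia.
      assert (F : (p^(8*l+1) | t2^2 - t0*t1)).
      { apply (lc2 _ _ _ 1 1 _ HQ1 F0). ring. }
      assert (K : (p^(4*l+1) | t1*t1*t1 * (t0*G A B))).
      { apply (lc3 _ (t2^2 - t0*t1) (t2*(2*t0+(A+B-1)*t1)) (A*B*t1^2 - t0^2)
            (-(G A B*t1^2)) (t2*((2*t0+(A+B-1)*t1)-4*t0)) (-4*t2^2)); auto.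
        unfold G; ring. }
      apply cancelu in K; auto; try lia.
      apply (Lmul p (2*l) l t0 (G A B)); auto; try lia.
      apply (weak _ (4*l+1)); auto; lia.
Qed.
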